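(* Let $\mathcal{H}$ be a real Hilbert space of dimension $d$, $G>0$, $\mathcal{G}=\{g\in\mathcal{H}:\|g\|\le G\}$, $\theta\in\mathcal{H}$ fixed, and $h:\mathbb{R}\to\mathbb{R}$ an even convex function that is increasing on $[0,\infty)$. Consider the one-round game \[ H=\min_{w\in\mathcal{H}}\max_{g\in\mathcal{G}}\ \langle w,g\rangle+h(\|\theta-g\|). \] If $d>1$, $h$ is twice differentiable, and $h''(x)\le h'(x)/x$ for all $x>0$, then \[ H=h\Big(\sqrt{\|\theta\|^2+G^2}\Big)\qquad\text{and}\qquad w^*=\frac{\theta}{\sqrt{\|\theta\|^2+G^2}}\,h'\Big(\sqrt{\|\theta\|^2+G^2}\Big), \] and any $g^*\in\mathcal{H}$ with $\langle\theta,g^*\rangle=0$ and $\|g^*\|=G$ is a minimax play for the adversary.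
   Context: Write $H(w,g)=\langle w,g\rangle+h(\|\theta-g\|)$. $w^*=\arg\min_w\max_{g\in\mathcal{G}}H(w,g)$ is the minimax play of the player, and a minimax play of the adversary is a $g^*\in\arg\max_{g\in\mathcal{G}}H(w^*,g)$. *)

(* Defs.v *)
From HB Require Import structures.
From mathcomp Require Import all_boot all_order all_algebra.
From mathcomp Require Import all_classical all_reals all_analysis.
Set Implicit Arguments. Unset Strict Implicit. Unset Printing Implicit Defensive.
Import Order.TTheory GRing.Theory Num.Theory.
Local Open Scope ring_scope.

(* The d-dimensional real Hilbert space is modelled (up to isometric
   isomorphism) as row vectors 'rV[R]_d with the Euclidean inner product. *)
Definition inner {R : realType} {d : nat} (u v : 'rV[R]_d) : R :=
  \sum_(i < d) u 0 i * v 0 i.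

Definition hnorm {R : realType} {d : nat} (u : 'rV[R]_d) : R :=
  Num.sqrt (inner u u).

Definition adv_set {R : realType} {d : nat} (Gr : R) : set 'rV[R]_d :=
  [set g | hnorm g <= Gr].

Definition payoff {R : realType} {d : nat} (h : R -> R) (theta w g : 'rV[R]_d)
  : R := inner w g + h (hnorm (theta - g)).

Definition even_fun {R : realType} (h : R -> R) : Prop :=
  forall x, h (- x) = h x.

Definition convex_fun {R : realType} (h : R -> R) : Prop :=
  forall x y t : R, 0 <= t -> t <= 1 ->
    h (t * x + (1 - t) * y) <= t * h x + (1 - t) * h y.

(* "increasing on [0, oo)" read as non-decreasing there. *)
Definition incr_nonneg {R : realType} (h : R -> R) : Prop :=
  forall x y : R, 0 <= x -> x <= y -> h x <= h y.

Definition twice_differentiable {R : realType} (h : R -> R) : Prop :=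
  forall x : R, derivable h x 1 /\ derivable (derive1 h) x 1.

(* V is the value min_w max_{g in G} H(w,g), with both min and max attained:
   every w has a maximising g and  max_g H(w,g) >= V, and some w achieves V. *)
Definition is_minimax_value {R : realType} {d : nat} (h : R -> R)
  (theta : 'rV[R]_d) (Gr : R) (V : R) : Prop :=
  (forall w : 'rV[R]_d, exists2 g, adv_set Gr g &
      (forall g', adv_set Gr g' -> payoff h theta w g' <= payoff h theta w g)
      /\ V <= payoff h theta w g) /\
  (exists w : 'rV[R]_d, forall g, adv_set Gr g -> payoff h theta w g <= V).

Definition is_minimax_player {R : realType} {d : nat} (h : R -> R)
  (theta : 'rV[R]_d) (Gr : R) (V : R) (w : 'rV[R]_d) : Prop :=
  is_minimax_value h theta Gr V /\
  (forall g, adv_set Gr g -> payoff h theta w g <= V).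

Definition is_minimax_adv {R : realType} {d : nat} (h : R -> R)
  (theta : 'rV[R]_d) (Gr : R) (w g : 'rV[R]_d) : Prop :=
  adv_set Gr g /\
  (forall g', adv_set Gr g' -> payoff h theta w g' <= payoff h theta w g).

(* Main.v *)
Require Import Defs.
From HB Require Import structures.
From mathcomp Require Import all_boot all_order all_algebra.
From mathcomp Require Import all_classical all_reals all_analysis.
From mathcomp Require Import lra ring.
Import Order.TTheory GRing.Theory Num.Def Num.Theory.
Import numFieldTopology.Exports numFieldNormedType.Exports.
Local Open Scope classical_set_scope.
Local Open Scope ring_scope.

Section Scalar.
Context {R : realType} {h : R -> R}.
Hypothesis h2 : twice_differentiable h.
Hypothesis hinc : incr_nonneg h.
Hypothesis hcond : forall x : R, 0 < x -> derive1 (derive1 h) x <= derive1 h x / x.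

Lemma hder (x : R) : is_derive x (1:R) h (derive1 h x).
Proof. by rewrite derive1E; apply: derivableP; case: (h2 x). Qed.

Lemma hpder (x : R) : is_derive x (1:R) (derive1 h) (derive1 (derive1 h) x).
Proof. by rewrite derive1E; apply: derivableP; case: (h2 x). Qed.

Lemma hp_ge0 (x : R) : 0 < x -> 0 <= derive1 h x.
Proof.
move=> x0; rewrite derive1E /derive.
apply: limr_ge.
  by case: (h2 x).
near=> t.
have t0 : t != 0.
  near: t. exact: (nbhs_dnbhs_neq (0 : R^o)).
have tx : `|t| < x by near: t; exact: dnbhs0_lt.
change (0 <= t^-1 * (h (t * 1 + x) - h x)); rewrite mulr1.

move: t0; rewrite neq_lt => /orP[t0|t0].
- rewrite nmulr_rge0 ?invr_lt0// subr_le0 hinc//.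
    by move: tx; rewrite ltr0_norm//; lra.
  by lra.
- rewrite pmulr_rge0 ?invr_gt0// subr_ge0 hinc ?ltW//.
  by lra.
Unshelve. all: by end_near. Qed.

Lemma psi_mono (a b : R) : 0 < a -> a <= b ->
  derive1 h b / b <= derive1 h a / a.
Proof.
move=> a0; rewrite le_eqVlt => /orP[/eqP->//|ab].
pose f : R -> R := (derive1 h * (fun y : R => (id y)^-1)).
have fd : forall x : R, 0 < x -> is_derive x (1:R) f
   (derive1 h x *: (- (id x) ^- 2 *: (1:R)) + (id x)^-1 *: derive1 (derive1 h) x).
  move=> x x0; apply: is_deriveM; first exact: hpder.
  by apply: is_deriveV; rewrite gt_eqF.
have cont : {within `[a, b], continuous f}.
  apply: derivable_within_continuous => x xab.
  have x0 : 0 < x by apply: (lt_le_trans a0 (andP (xab : _ && _)).1).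
  by case: (fd x x0).
have [c cab E] := MVT ab (fun x xab => fd x (lt_trans a0 (andP (xab : _ && _)).1)) cont.
have c0 : 0 < c by apply: (lt_trans a0 (andP (cab : _ && _)).1).
move: E; rewrite /f /= => E.
rewrite -subr_le0 E.
apply: mulr_le0_ge0; last by rewrite subr_ge0 ltW.
rewrite [X in X <= 0](_ : _ = c^-1 * (derive1 (derive1 h) c - derive1 h c / c)); last first.
  rewrite /GRing.scale /= expr2 invfM; ring.
by rewrite pmulr_rle0 ?invr_gt0 // subr_le0; exact: hcond.
Qed.

Lemma phi_le (s r : R) : 0 <= s -> 0 < r ->
  h s - derive1 h r / r / 2 * s ^+ 2 <= h r - derive1 h r / r / 2 * r ^+ 2.
Proof.
move=> s0 r0.
set K := derive1 h r / r.
pose f : R -> R := h - (K / 2) \*: (@id R ^+ 2).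
have fd : forall x : R, is_derive x (1:R) f (derive1 h x - K * x).
  move=> x; apply: is_derive_eq.
    exact: (is_deriveB (hder x) (is_deriveZ (K/2) (is_deriveX 2 (is_derive_id x (1:R))))).
  rewrite /GRing.scale /= expr1 mulr1; by field.
have cont : forall a b : R, {within `[a, b], continuous f}.
  by move=> a b; apply: derivable_within_continuous => y _; case: (fd y).
have fE : forall x, f x = h x - K / 2 * x ^+ 2 by [].
case: (ltgtP s r) => [sr|rs|->//].
- have [c cab E] := MVT sr (fun x _ => fd x) (cont s r).
  move: E; rewrite !fE => E.
  rewrite -subr_ge0 E; apply: mulr_ge0; last by rewrite subr_ge0 ltW.
  have c0 : 0 < c by apply: (le_lt_trans s0 (andP (cab : _ && _)).1).
  have cr : c <= r by apply: ltW; exact: (andP (cab : _ && _)).2.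
  have := @psi_mono c r c0 cr; rewrite -/K => H.
  rewrite subr_ge0 -ler_pdivlMr //.
- have [c cab E] := MVT rs (fun x _ => fd x) (cont r s).
  move: E; rewrite !fE => E.
  rewrite -subr_le0 E; apply: mulr_le0_ge0; last by rewrite subr_ge0 ltW.
  have c0 : 0 < c by apply: (lt_trans r0 (andP (cab : _ && _)).1).
  have cr : r <= c by apply: ltW; exact: (andP (cab : _ && _)).1.
  have := @psi_mono r c r0 cr; rewrite -/K => H.
  rewrite subr_le0 -ler_pdivrMr //.
Qed.
End Scalar.
Section Vec.
Context {R : realType} {d : nat}.
Implicit Types u v w : 'rV[R]_d.

Lemma innerC u v : inner u v = inner v u.
Proof. by apply: eq_bigr => i _; rewrite mulrC. Qed.

Lemma innerZl k u v : inner (k *: u) v = k * inner u v.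
Proof. by rewrite /inner mulr_sumr; apply: eq_bigr => i _; rewrite mxE mulrA. Qed.

Lemma innerZr k u v : inner u (k *: v) = k * inner u v.
Proof. by rewrite innerC innerZl innerC. Qed.

Lemma inner_ge0 u : 0 <= inner u u.
Proof. by apply: sumr_ge0 => i _; rewrite -expr2 sqr_ge0. Qed.

Lemma innerBB u v : inner (u - v) (u - v) = inner u u - 2 * inner u v + inner v v.
Proof.
rewrite /inner mulr_sumr -sumrB -big_split /=; apply: eq_bigr => i _.
rewrite !mxE; ring.
Qed.

Lemma hnorm_ge0 u : 0 <= hnorm u.
Proof. exact: sqrtr_ge0. Qed.

Lemma hnorm_sqr u : hnorm u ^+ 2 = inner u u.
Proof. by rewrite sqr_sqrtr // inner_ge0. Qed.

Lemma hnorm_eq u a : 0 <= a -> inner u u = a ^+ 2 -> hnorm u = a.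
Proof. by move=> a0 E; rewrite /hnorm E sqrtr_sqr ger0_norm. Qed.

Lemma coord_le_hnorm u i : `|u 0 i| <= hnorm u.
Proof.
rewrite -(sqrtr_sqr (u 0 i)) /hnorm ler_sqrt; last exact: inner_ge0.
rewrite /inner (bigD1 i) //= -expr2 lerDl.
by apply: sumr_ge0 => j _; rewrite -expr2 sqr_ge0.
Qed.

Lemma inner_cont u : continuous (fun g : 'rV[R]_d => inner u g).
Proof.
rewrite /inner.
apply: (@continuous_big _ _ +%R 0 predT add_continuous) => i _.
move=> x; apply: (@continuousM _ _ (fun=> u 0 i) (fun g : 'rV[R]_d => g 0 i)).
  exact: cst_continuous.
exact: coord_continuous.
Qed.

Lemma innerself_cont : continuous (fun g : 'rV[R]_d => inner g g).
Proof.
rewrite /inner.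
apply: (@continuous_big _ _ +%R 0 predT add_continuous) => i _.
move=> x; apply: (@continuousM _ _ (fun g : 'rV[R]_d => g 0 i) (fun g : 'rV[R]_d => g 0 i)); exact: coord_continuous.
Qed.

Lemma hnorm_cont : continuous (@hnorm R d).
Proof.
move=> x; apply: continuous_comp; first exact: innerself_cont.
exact: sqrt_continuous.
Qed.


Lemma ball_compact (G : R) : compact (adv_set G : set 'rV[R]_d).
Proof.
apply: (@subclosed_compact _ _ [set v : 'rV[R]_d | forall i, v ord0 i \in `[(- G), G]]).
- have -> : (adv_set G : set 'rV[R]_d) = hnorm @^-1` [set x | x <= G] by [].
  apply: preimage_closed; last exact: closed_le.
  by move=> x _; exact: hnorm_cont.
- apply: (@rV_compact _ _ (fun=> `[(- G), G]%classic)) => i.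
  exact: segment_compact.
- move=> g gG i; rewrite in_itv /= -ler_norml.
  exact: le_trans (coord_le_hnorm g i) gG.
Qed.
End Vec.

Lemma sum2 (R : realType) n (F : 'I_n.+2 -> R) :
  (forall i : 'I_n.+2, (1 < i)%N -> F i = 0) ->
  \sum_(i < n.+2) F i = F ord0 + F (lift ord0 ord0).
Proof.
move=> F0; rewrite big_ord_recl big_ord_recl big1 ?addr0 ?addrA // => i _.
by apply: F0.
Qed.

Lemma orth_exists (R : realType) d (th : 'rV[R]_d) : (1 < d)%N ->
  exists v : 'rV[R]_d, inner th v = 0 /\ 0 < inner v v.
Proof.
case: d th => [|[|n]] th //= _.
set a := th 0 ord0; set b := th 0 (lift ord0 ord0).
have [ab0|abn0] := eqVneq (a ^+ 2 + b ^+ 2) 0.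
  have a0 : a = 0 by apply/eqP; rewrite -sqrf_eq0 eq_le sqr_ge0 andbT; rewrite -ab0 lerDl sqr_ge0.
  have b0 : b = 0 by apply/eqP; rewrite -sqrf_eq0 eq_le sqr_ge0 andbT; rewrite -ab0 lerDr sqr_ge0.
  exists (\row_(j < n.+2) (if val j == 0%N then 1 else 0)).
  rewrite /inner !sum2 => [|i Hi|i Hi]; rewrite ?mxE /=;
    try (case: i Hi => -[|[|]] //= *; rewrite ?mulr0 ?mul0r //).
  by rewrite -/a -/b a0 b0; split; lra.
exists (\row_(j < n.+2) (if val j == 0%N then b else if val j == 1%N then - a else 0)).
rewrite /inner !sum2 => [|i Hi|i Hi]; rewrite ?mxE /=;
  try (case: i Hi => -[|[|]] //= *; rewrite ?mulr0 ?mul0r //).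
rewrite -/a -/b; split; first ring.
rewrite lt_def; apply/andP; split; last by rewrite -!expr2 addr_ge0 ?sqr_ge0.
by rewrite mulrNN -!expr2 addrC.
Qed.

Theorem lemma5 (R : realType) (d : nat) (Gr : R) (theta : 'rV[R]_d)
  (h : R -> R) :
  (1 < d)%N -> 0 < Gr ->
  even_fun h -> convex_fun h -> incr_nonneg h ->
  twice_differentiable h ->
  (forall x : R, 0 < x -> derive1 (derive1 h) x <= derive1 h x / x) ->
  let r := Num.sqrt (hnorm theta ^+ 2 + Gr ^+ 2) in
  let wstar := (derive1 h r / r) *: theta in
  is_minimax_value h theta Gr (h r) /\
  is_minimax_player h theta Gr (h r) wstar /\
  (forall gstar : 'rV[R]_d, inner theta gstar = 0 -> hnorm gstar = Gr ->
     is_minimax_adv h theta Gr wstar gstar).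
Proof.
move=> d1 G0 hev hconv hinc h2 hcond r wstar.
set T := hnorm theta.
set K := derive1 h r / r.
have T0 : 0 <= T := hnorm_ge0 theta.
have rr0 : 0 <= T ^+ 2 + Gr ^+ 2 by rewrite addr_ge0 ?sqr_ge0.
have r0 : 0 < r.
  by rewrite sqrtr_gt0 (ltr_wpDl (sqr_ge0 T)) // exprn_gt0.
have r2 : r ^+ 2 = T ^+ 2 + Gr ^+ 2 by rewrite sqr_sqrtr.
have K0 : 0 <= K by rewrite divr_ge0 ?(ltW r0) // (hp_ge0 h2 hinc r r0).
have orth_r : forall g, inner theta g = 0 -> hnorm g = Gr -> hnorm (theta - g) = r.
  move=> g tg ng; apply: hnorm_eq; first exact: ltW.
  by rewrite innerBB tg -(hnorm_sqr theta) -(hnorm_sqr g) ng r2 -/T; ring.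
have player : forall g, adv_set Gr g -> payoff h theta wstar g <= h r.
  move=> g gG; rewrite /payoff /wstar innerZl -/K.
  set s := hnorm (theta - g).
  have s0 : 0 <= s := hnorm_ge0 _.
  have hs : s ^+ 2 = T ^+ 2 - 2 * inner theta g + hnorm g ^+ 2.
    by rewrite /s hnorm_sqr innerBB !hnorm_sqr.
  have gG2 : hnorm g ^+ 2 <= Gr ^+ 2.
    have := hnorm_ge0 g; move: gG; rewrite /adv_set /= => gG g0; nra.
  have ph := phi_le h2 hcond s r s0 r0; rewrite -/K in ph.
  have e1 : K * inner theta g <= K * ((r ^+ 2 - s ^+ 2) / 2).
    apply: ler_wpM2l => //; rewrite r2 hs; lra.
  have E : h r - (K * inner theta g + h s) =
    (h r - K / 2 * r ^+ 2 - (h s - K / 2 * s ^+ 2)) +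
    (K * ((r ^+ 2 - s ^+ 2) / 2) - K * inner theta g) by ring.
  rewrite -subr_ge0 E; apply: addr_ge0; rewrite subr_ge0 //.
have value : is_minimax_value h theta Gr (h r).
  split; last by exists wstar.
  move=> w.
  have hcont : continuous h.
    move=> x; apply: differentiable_continuous; apply/derivable1_diffP.
    by case: (h2 x).
  have pcont : {within adv_set Gr, continuous (fun g => payoff h theta w g)}.
    apply: continuous_subspaceT => x; rewrite /payoff.
    apply: continuousD; first exact: inner_cont.
    apply: continuous_comp; last exact: hcont.
    apply: continuous_comp; last exact: hnorm_cont.
    by apply: continuousB; [exact: cst_continuous | exact: cvg_id].
  have ne : (adv_set Gr : set 'rV[R]_d) !=set0.
    exists 0; rewrite /adv_set /= /hnorm /inner big1 ?sqrtr0 ?ltW // => i _.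
    by rewrite mxE mul0r.
  have [c cB cmax] := EVT_max_rV ne (@ball_compact R d Gr) pcont.
  exists c; first by move: cB; rewrite inE.
  split.
    by move=> g' g'B; apply: cmax; rewrite inE.
  have [v [tv vv]] := @orth_exists R d theta d1.
  set nv := hnorm v.
  have nv0 : 0 < nv by rewrite sqrtr_gt0.
  pose k := if 0 <= inner w v then Gr / nv else - (Gr / nv).
  have kv : hnorm (k *: v) = Gr.
    apply: hnorm_eq; first exact: ltW.
    rewrite innerZl innerZr -(hnorm_sqr v) -/nv /k.
    case: ifP => _; rewrite ?mulNr ?mulrN ?opprK; field; rewrite gt_eqF //.
  have tkv : inner theta (k *: v) = 0 by rewrite innerZr tv mulr0.
  apply: le_trans (cmax (k *: v) _); last by rewrite inE /adv_set /= kv.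
  rewrite /payoff orth_r // lerDr innerZr /k.
  case: ifP => H.
    by rewrite mulr_ge0 // divr_ge0 // ltW.
  rewrite mulNr oppr_ge0 mulr_ge0_le0 ?divr_ge0 ?(ltW G0) ?(ltW nv0) //.
  by apply: ltW; rewrite ltNge H.
split => //.
split; first by split.
move=> gs tg ng; split; first by rewrite /adv_set /= ng.
move=> g' g'B.
have -> : payoff h theta wstar gs = h r.
  by rewrite /payoff /wstar innerZl tg mulr0 add0r orth_r.
exact: player.
Qed.
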